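(* Let $m\ge 1$ and let $q$ be an $m\times m$ matrix each of whose entries is either $0$ or an indeterminate, where the indeterminates occurring in $q$ are pairwise distinct and algebraically independent over a field $F$ ($F=\mathbb{R}$ or $\mathbb{C}$). Suppose that $\det q$, viewed as a polynomial in $F[\text{indeterminates}]$, is irreducible. Then every first minor of $q$ (the determinant of any $(m-1)\times(m-1)$ submatrix obtained by deleting one row and one column; for $m=1$ this is the empty determinant $1$) is a nonzero polynomial. Consequently, for almost all values of the hopping terms, every first minor of $q$ is nonzero.
   Context: In the physical interpretation, $q$ is the off-diagonal block of a chiral tight-binding Hamiltonian $H=\begin{pmatrix}0&q\\ q^\dagger&0\end{pmatrix}$ on a bipartite graph with equal numbers of ''black'' and ''white'' sites: rows of $q$ are indexed by one sublattice, columns by the other, and the entry for a pair of sites is an indeterminate (a ''hopping term'') if the sites are joined by an edge and $0$ otherwise. Deleting a row and a column corresponds to deleting one white and one black site. ''For almost all values of the hopping terms'' means: for all assignments of values in $F$ to the indeterminates outside the zero set of some nonzero polynomial. *)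

(* Defs.v *)
From mathcomp Require Import all_boot all_algebra.
From mathcomp Require Import mpoly.
Import GRing.Theory.

Set Implicit Arguments.
Unset Strict Implicit.
Unset Printing Implicit Defensive.

Local Open Scope ring_scope.

Definition irreducible_elt (R : idomainType) (p : R) : Prop :=
  [/\ p != 0, p \isn't a GRing.unit &
      forall a b : R, p = a * b -> a \is a GRing.unit \/ b \is a GRing.unit].

(* The "pattern" matrix q of size m x m attached to the support
   S : 'I_m -> 'I_m -> bool (S i j = true iff sites i and j are joined by an
   edge).  The polynomial ring has one indeterminate per position (i,j),
   indexed by mxvec_index i j : 'I_(m * m); so the indeterminates occurring
   in q are pairwise distinct and algebraically independent over F. *)
Definition pattern_mx (F : fieldType) (m : nat) (S : 'I_m -> 'I_m -> bool)
  : 'M[{mpoly F[m * m]}]_m :=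
  \matrix_(i, j) (if S i j then 'X_(mxvec_index i j) else 0).

Definition first_minor (R : comNzRingType) (n : nat) (A : 'M[R]_n.+1)
  (i j : 'I_n.+1) : R := \det (row' i (col' j A)).

(* Main.v *)
Require Import Defs.
From mathcomp Require Import all_boot all_algebra all_fingroup.
From mathcomp Require Import mpoly.
Import GRing.Theory.
Set Implicit Arguments.
Unset Strict Implicit.
Unset Printing Implicit Defensive.
Local Open Scope ring_scope.
Lemma path_perm m (S : 'I_m -> 'I_m -> bool) (s : 'S_m) (i : 'I_m) 
  (hs : forall b, S b (s b)) p : forall a,
  path (fun x y => S x (s y)) a p -> last a p = i -> uniq (a :: p) ->
  exists pi : 'S_m, [/\ pi i = s a, forall b, b != i -> S b (pi b)
     & forall b, b \notin a :: p -> pi b = s b].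
Proof.
elim: p => [|a1 p IH] a /=.
  by move=> _ -> _; exists s; split.
case/andP=> ea pa la /andP[ana ua].
have [pi1 [pi1i pi1S pi1s]] := IH a1 pa la ua.
have iin : i \in a1 :: p by rewrite -la mem_last.
have ai : a != i by apply: contraNneq ana => ->.
have pia : pi1 a = s a by apply: pi1s.
exists (tperm i a * pi1)%g; split.
- by rewrite permM tpermL.
- move=> b bi; rewrite permM; case: (tpermP i a b) => [/eqP|->|_ _ ].
  + by rewrite (negPf bi).
  + by rewrite pi1i.
  + exact: pi1S.
- move=> b; rewrite inE negb_or => /andP[ba bn].
  have bi : b != i by apply: contraNneq bn => ->.
  by rewrite permM tpermD 1?eq_sym // pi1s.
Qed.
Lemma block_fact (R : comNzRingType) m (q : 'M[R]_m) (s : 'S_m) (Rs : {set 'I_m}) :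
  (forall a b, a \in Rs -> b \notin Rs -> q a (s b) = 0) ->
  q = (\matrix_(a,c) if a \in Rs then q a c else (s a == c)%:R)
      *m (perm_mx s)^T *m (\matrix_(a,c) if a \in Rs then (s a == c)%:R else q a c).
Proof.
move=> hq; rewrite tr_perm_mx -col_permE; apply/matrixP=> a c; rewrite !mxE.
rewrite /col_perm; under eq_bigr => b _ do rewrite !mxE.
case: (boolP (a \in Rs)) => aR.
  rewrite (bigD1 (s^-1 c)%g) //= big1 ?addr0.
    rewrite permKV; case: (boolP (_ \in Rs)) => cR; first by rewrite eqxx mulr1.
    have -> : q a c = 0 by rewrite -(permKV s c) hq.
    by rewrite mul0r.
  move=> b bne.
  case: (boolP (b \in Rs)) => bR; last by rewrite hq ?bR ?mul0r.
  have -> : (s b == c) = false.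
    by apply/negbTE; apply: contra bne => /eqP <-; rewrite permK.
  by rewrite mulr0.
rewrite (bigD1 a) //= big1 ?addr0.
  by rewrite eqxx mul1r (negbTE aR).
move=> b bne; rewrite (inj_eq (@perm_inj _ s)) eq_sym (negbTE bne).
by rewrite mul0r.
Qed.
Lemma det_supp (R : comNzRingType) m (A : 'M[R]_m) (S : 'I_m -> 'I_m -> bool) :
  (forall a b, ~~ S a b -> A a b = 0) -> \det A != 0 ->
  exists s : 'S_m, forall a, S a (s a).
Proof.
move=> hA; case: (boolP [exists s : 'S_m, [forall a, S a (s a)]]).
  by case/existsP=> s /forallP hs _; exists s.
rewrite negb_exists => /forallP hs; rewrite /determinant big1 ?eqxx //.
move=> s _; have := hs s; rewrite negb_forall => /existsP[a ha].
by rewrite (bigD1 a) //= hA // mul0r mulr0.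
Qed.

Lemma det_row0 (R : comNzRingType) m (A : 'M[R]_m) i :
  (forall c, A i c = 0) -> \det A = 0.
Proof.
by move=> h; rewrite (expand_det_row _ i) big1 // => c _; rewrite h mul0r.
Qed.

Lemma nonunit0 (F : fieldType) N (p : {mpoly F[N]}) :
  p.@[fun _ => 0] = 0 -> p \isn't a GRing.unit.
Proof.
move=> h; apply/negP => /unitrP [y [hy _]].
have := congr1 (meval (fun _ => 0)) hy.
by rewrite mevalM h mulr0 meval1 => /eqP; rewrite eq_sym oner_eq0.
Qed.

Lemma meval_det (F : fieldType) N m (A : 'M[{mpoly F[N]}]_m) v :
  (\det A).@[v] = \det (map_mx (meval v) A).
Proof. by rewrite det_map_mx. Qed.


Lemma mxvec_index_eq m n (a b : 'I_m) (c d : 'I_n) :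
  (mxvec_index a c == mxvec_index b d) = ((a, c) == (b, d)).
Proof.
by rewrite /mxvec_index (inj_eq (@cast_ord_inj _ _ _)) (inj_eq (@enum_rank_inj _)).
Qed.

Lemma minor_nz (F : fieldType) n (S : 'I_n.+1 -> 'I_n.+1 -> bool)
  (pi : 'S_n.+1) i : (forall b, b != i -> S b (pi b)) ->
  exists v : 'I_(n.+1 * n.+1) -> F, 
  (first_minor (pattern_mx F S) i (pi i)).@[v] != 0.
Proof.
move=> hS.
pose v := fun u : 'I_(n.+1 * n.+1) =>
    if [exists b, (b != i) && (u == mxvec_index b (pi b))] then 1 else 0 : F.
exists v; rewrite /first_minor -det_map_mx.
have -> : map_mx (meval v) (row' i (col' (pi i) (pattern_mx F S))) =
          row' i (col' (pi i) (perm_mx pi)).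
  apply/matrixP=> a c; rewrite !mxE.
  have ai : lift i a != i by rewrite eq_sym neq_lift.
  set a' := lift i a; set c' := lift (pi i) c.
  have hv : v (mxvec_index a' c') = (pi a' == c')%:R.
    rewrite /v; case: (boolP [exists _, _]).
      case/existsP=> b /andP[_]; rewrite mxvec_index_eq xpair_eqE => /andP[/eqP <- /eqP ->].
      by rewrite eqxx.
    rewrite negb_exists => /forallP /(_ a'); rewrite ai mxvec_index_eq /=.
    rewrite xpair_eqE eqxx /= eq_sym => /negbTE -> //.
  case: ifP => hs; first by rewrite mevalXU hv.
  rewrite meval0; case: eqP => // e; move: (hS _ ai); by rewrite e hs.
have hP := expand_det_row (perm_mx pi : 'M[F]_n.+1) i.
rewrite (bigD1 (pi i)) // in hP.
rewrite /= big1 in hP; last first.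
  by move=> c hc; rewrite !mxE eq_sym (negbTE hc) mul0r.
rewrite addr0 !mxE eqxx mul1r det_perm /cofactor in hP.
apply/eqP => h0; move: hP; rewrite h0 mulr0 => /eqP.
by rewrite signr_eq0.
Qed.

Theorem mainTheorem1 (F : fieldType) (n : nat)
  (S : 'I_n.+1 -> 'I_n.+1 -> bool) :
  irreducible_elt (\det (pattern_mx F S)) ->
  (forall i j : 'I_n.+1, first_minor (pattern_mx F S) i j != 0) /\
  (exists P : {mpoly F[n.+1 * n.+1]},
     P != 0 /\
     forall v : 'I_(n.+1 * n.+1) -> F, P.@[v] != 0 ->
       forall i j : 'I_n.+1, (first_minor (pattern_mx F S) i j).@[v] != 0).
Proof.
move=> irr.
have hq0 : forall a b, ~~ S a b -> pattern_mx F S a b = 0.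
  by move=> a b h; rewrite mxE (negbTE h).
have [dq0 ndu hfac] := irr.
have [s hs] := det_supp hq0 dq0.
have ev0 : forall a b, (pattern_mx F S a b).@[fun _ => 0] = 0.
  by move=> a b; rewrite mxE; case: ifP => _; rewrite ?mevalXU ?meval0.
have key : forall i j, first_minor (pattern_mx F S) i j != 0.
  move=> i j.
  pose e := fun x y => S x (s y).
  pose k := (s^-1 j)%g.
  have: connect e k i.
    apply/negPn/negP => nc.
    pose Rs := [set a | connect e k a].
    have hcl : forall a b, a \in Rs -> b \notin Rs -> pattern_mx F S a (s b) = 0.
      move=> a b; rewrite !inE => ha hb; apply: hq0; apply: contra hb => hab.
      exact: connect_trans ha (connect1 hab).
    have kR : k \in Rs by rewrite inE connect0.
    have iR : i \notin Rs by rewrite inE.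
    have := block_fact hcl; set A1 := \matrix_(_,_) _; set A2 := \matrix_(_,_) _ => hqe.
    have := hfac (\det A1 * \det (perm_mx s)^T) (\det A2).
    rewrite {1}hqe !det_mulmx => /(_ erefl) [].
      apply/negP; apply: nonunit0; rewrite mevalM -det_map_mx (@det_row0 _ _ (map_mx _ A1) k) ?mul0r // => c.
      by rewrite /A1 !mxE kR; case: (S k c); rewrite /= ?mevalXU ?meval0.
    apply/negP; apply: nonunit0; rewrite -det_map_mx (@det_row0 _ _ _ i) // => c.
    by rewrite /A2 !mxE (negbTE iR); case: (S i c); rewrite /= ?mevalXU ?meval0.
  case/connectP => p pp lp.
  case: (shortenP pp) lp => p' pp' up' _ lp.
  have [pi [pii piS _]] := path_perm (i:=i) hs pp' (esym lp) up'.
  have [v hv] := @minor_nz F _ S pi i piS.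
  rewrite pii permKV in hv.
  by apply: contraNneq hv => ->; rewrite meval0.
split => //.
exists (\prod_i \prod_j first_minor (pattern_mx F S) i j); split.
  apply/prodf_neq0 => i _; apply/prodf_neq0 => j _; exact: key.
move=> v; rewrite rmorph_prod => /prodf_neq0 hi i j.
by move: (hi i isT); rewrite rmorph_prod => /prodf_neq0; apply.
Qed.
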